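(* Let $1\le l\le m$ and $0\le r<m-l$, and let $C=\Gamma_2G$ be the binary convolutional code generated by the semi-infinite matrix $G$ built from $G_0,\dots,G_{2^l-1}$ as described in the context. Then the free distance of the Euclidean dual $C^\perp$ equals $2^{r+1}$.
   Context: For $u,v\in\mathbf F_2^N$ the boolean product is $uv=(u_1v_1,\dots,u_Nv_N)$; a product of $i$ vectors has degree $i$. For $s\ge1$ let $b_0\in\mathbf F_2^{2^s}$ be the all-ones vector and for $1\le i\le s$ let $b_i\in\mathbf F_2^{2^s}$ be the concatenation of $2^{s-i}$ blocks $(\mathbf 0\,\mathbf 1)$, where $\mathbf 0,\mathbf 1\in\mathbf F_2^{2^{i-1}}$ are constant. Let $B_s^i$ be the matrix whose rows are all products of $i$ distinct elements of $\{b_1,\dots,b_s\}$ (with $B_s^0=b_0$; $B_s^i$ is empty for $i<0$ or $i>s$), and let $G_s^r$ be the matrix with rows $B_s^r,B_s^{r-1},\dots,B_s^0$ stacked (empty if $r<0$); it generates the Reed–Muller code $\mathcal R(r,s)$ of length $2^s$, dimension $\sum_{i=0}^r\binom si$, minimum distance $2^{s-r}$, with $\mathcal R(r,s)^\perp=\mathcal R(s-1-r,s)$. Let $w_j=(1,1,0,\dots,0)\in\mathbf F_2^{2^j}$ and $c\,w_j$ the concatenation of $c$ copies. For $0\le i\le l-1$ let $M_{i,l}=(2^{l-i-1}w_{i+1})\otimes B_{m-l}^{r-i}$ (Kronecker product; a $\binom{m-l}{r-i}\times2^m$ matrix) and $M_{l,l}=[G_{m-l}^{r-l}\ 0\ \cdots\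 0]$ ($2^m$ columns). Define $G_0,\dots,G_{2^l-1}$, each with $2^{m-l}$ columns, by $[G_0\ G_1\ \cdots\ G_{2^l-1}]$ = the matrix with row blocks $M_{0,l},\dots,M_{l,l}$ stacked. Then $G$ is the semi-infinite matrix whose $j$-th block row ($j\ge0$) has $G_0,G_1,\dots,G_{2^l-1}$ in block columns $j,j+1,\dots,j+2^l-1$ and zeros elsewhere. $\Gamma_2$ is the set of finitely supported binary sequences, $\Gamma_2G$ the set of finite linear combinations of rows of $G$, $C^\perp=\{u\in\Gamma_2:\sum_iu_iv_i=0\ \forall v\in C\}$; free distance = minimum number of nonzero entries of a nonzero element. *)

(* Defs.v *)
From mathcomp Require Import all_boot all_algebra.
Set Implicit Arguments. Unset Strict Implicit. Unset Printing Implicit Defensive.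
Import GRing.Theory.
Local Open Scope ring_scope.

(* b_k in F_2^{2^s}, entry at 0-based position c < 2^s.
   b_0 = all ones; for k >= 1, b_k is the concatenation of blocks (0 1),
   each half of length 2^(k-1): entry is 1 iff (c mod 2^k) >= 2^(k-1). *)
Definition bvec (k c : nat) : 'F_2 :=
  if k == 0%N then 1 else ((2 ^ k.-1 <= c %% 2 ^ k)%N : bool)%:R.

(* Row of B_s^i indexed by the subset A of {b_1..b_s} (element k : 'I_s
   stands for b_(k+1)); the empty product is b_0. *)
Definition prodrow (s : nat) (A : {set 'I_s}) (c : nat) : 'F_2 :=
  if A == set0 then bvec 0 c else \prod_(k in A) bvec k.+1 c.

(* Entry j (0-based, j < 2^l) of (2^(l-i-1) w_(i+1)), w_(i+1) = (1,1,0,...,0)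
   of length 2^(i+1). *)
Definition wrep (i j : nat) : 'F_2 := ((j %% 2 ^ i.+1 < 2)%N : bool)%:R.

(* Row labels of the stacked matrix [M_{0,l}; ...; M_{l,l}]:
   (i, A) with i < l and #|A| = r - i  (a row of M_{i,l}, from B_{m-l}^{r-i}),
   or i = l and #|A| <= r - l   (a row of M_{l,l}, from G_{m-l}^{r-l}).
   Blocks with negative degree are empty, hence the requirement i <= r. *)
Definition valid_label (m l r : nat) (i : nat) (A : {set 'I_(m - l)}) : bool :=
  [&& (i <= r)%N, (i <= l)%N &
      if (i < l)%N then #|A| == (r - i)%N else (#|A| <= r - l)%N].

Definition Gblock (m l : nat) (j i : nat) (A : {set 'I_(m - l)}) (c : nat)
  : 'F_2 :=
  if (i < l)%N then wrep i j * prodrow A c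
  else if j == 0%N then prodrow A c else 0.

(* Entry at position n of the row of the semi-infinite matrix G lying in
   block row t with label (i,A): G_k sits in block column t + k. *)
Definition Grow (m l : nat) (t i : nat) (A : {set 'I_(m - l)}) (n : nat)
  : 'F_2 :=
  let blk := (n %/ 2 ^ (m - l))%N in
  let c := (n %% 2 ^ (m - l))%N in
  if (t <= blk)%N && (blk < t + 2 ^ l)%N then @Gblock m l (blk - t)%N i A c else 0.

(* C = Gamma_2 G : finite linear combinations of rows of G. *)
Definition inCode (m l r : nat) (v : nat -> 'F_2) : Prop :=
  exists S : seq (nat * nat * {set 'I_(m - l)} * 'F_2),
    all (fun p => @valid_label m l r p.1.1.2 p.1.2) S /\
    forall n, v n = \sum_(p <- S) p.2 * @Grow m l p.1.1.1 p.1.1.2 p.1.2 n.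

(* Gamma_2 : finitely supported binary sequences, represented as finite lists
   (entries beyond the list are 0). *)
Definition nonzero (u : seq 'F_2) : bool := has (fun x => x != 0) u.
Definition weight (u : seq 'F_2) : nat := count (fun x => x != 0) u.

Definition inDual (m l r : nat) (u : seq 'F_2) : Prop :=
  forall v, inCode m l r v -> \sum_(n < size u) u`_n * v n = 0.

(* Main.v *)
Require Import Defs.
From mathcomp Require Import all_boot all_algebra.
From mathcomp Require Import zify.
Set Implicit Arguments. Unset Strict Implicit. Unset Printing Implicit Defensive.
Import GRing.Theory.
Local Open Scope ring_scope.

Lemma F2_cases (a : 'F_2) : a = 0 \/ a = 1.
Proof. case: a => [[|[|n]] Hn]; [left|right|by []]; exact/val_inj. Qed.

Lemma F2_add_self (a : 'F_2) : a + a = 0.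
Proof. by case: (F2_cases a) => H; rewrite H; apply/eqP. Qed.

Lemma F2_add0_eq (a b : 'F_2) : a + b = 0 -> a = b.
Proof. by case: (F2_cases a) => H; case: (F2_cases b) => H'; rewrite H H' //; move/eqP. Qed.

Lemma F2_neq_add (a b : 'F_2) : (((a + b)%R != 0%R) <= (a != 0%R) + (b != 0%R))%N.
Proof. by case: (F2_cases a) => H; case: (F2_cases b) => H'; rewrite H H'; vm_compute. Qed.

Lemma F2_bool (b : bool) : ((b%:R : 'F_2) != 0) = b.
Proof. by case: b. Qed.

Lemma big3 (R : Type) (idx : R) (op : Monoid.law idx) (F : nat -> R) lo w M :
  (lo + w <= M)%N ->
  \big[op/idx]_(n < M) F n =
  op (op (\big[op/idx]_(n < lo) F n) (\big[op/idx]_(c < w) F (lo + c)%N))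
     (\big[op/idx]_(lo + w <= n < M) F n).
Proof.
move=> H.
rewrite -(big_mkord xpredT) (big_cat_nat (leq0n (lo + w)) H).
rewrite (big_cat_nat (leq0n lo) (leq_addr w lo)) big_mkord.
congr (op (op _ _) _).
rewrite -{1}[lo]add0n big_addn addKn big_mkord.
by apply: eq_bigr => i _; rewrite addnC.
Qed.

Lemma big_ext (R : Type) (idx : R) (op : Monoid.law idx) (F : nat -> R) M M' :
  (M <= M')%N -> (forall n, (M <= n)%N -> F n = idx) ->
  \big[op/idx]_(n < M) F n = \big[op/idx]_(n < M') F n.
Proof.
move=> H HF.
rewrite -!(big_mkord xpredT) (big_cat_nat (leq0n M) H).
rewrite [X in op _ X]big1_seq ?Monoid.mulm1 // => n /andP[_].
by rewrite mem_iota => /andP[Hn _]; exact: HF.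
Qed.

Lemma sum_split (R : Type) (idx : R) (op : Monoid.law idx) (F : nat -> R) t :
  \big[op/idx]_(c < 2 ^ t.+1) F c =
  op (\big[op/idx]_(c < 2 ^ t) F c) (\big[op/idx]_(c < 2 ^ t) F (2 ^ t + c)%N).
Proof.
have H : (2 ^ t + 2 ^ t <= 2 ^ t.+1)%N by rewrite expnS mul2n addnn.
rewrite (big3 op F H) big_geq ?Monoid.mulm1 //.
by rewrite expnS mul2n addnn.
Qed.

Lemma count_sum (T : Type) (a : pred T) (x0 : T) (s : seq T) :
  count a s = (\sum_(i < size s) a (nth x0 s i))%N.
Proof.
elim: s => [|x s IH] /=; first by rewrite big_ord0.
by rewrite big_ord_recl /= IH.
Qed.

Definition mono (B : seq nat) (c : nat) : 'F_2 := \prod_(k <- B) bvec k.+1 c.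

Lemma bvec_low t c : (c < 2 ^ t)%N -> bvec t.+1 c = 0.
Proof.
move=> Hc; rewrite /bvec /= modn_small; last first.
  by apply: (leq_trans Hc); rewrite leq_exp2l.
by rewrite leqNgt Hc.
Qed.

Lemma bvec_high t c : (c < 2 ^ t)%N -> bvec t.+1 (2 ^ t + c) = 1.
Proof.
move=> Hc; rewrite /bvec /= modn_small ?leq_addr //.
by rewrite expnS mul2n -addnn ltn_add2l.
Qed.

Lemma bvec_shift k t c : (k < t)%N -> bvec k.+1 (2 ^ t + c) = bvec k.+1 c.
Proof.
move=> Hk; rewrite /bvec /=.
have -> : (2 ^ t = 2 ^ (t - k.+1) * 2 ^ k.+1)%N by rewrite -expnD subnK.
by rewrite modnMDl.
Qed.

Lemma mono_shift_low t B c : all (fun k => (k < t)%N) B ->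
  mono B (2 ^ t + c) = mono B c.
Proof.
move=> /allP HB; rewrite /mono; apply: eq_big_seq => k Hk.
by rewrite bvec_shift // HB.
Qed.

Lemma mono_shift t B c : uniq B -> all (fun k => (k < t.+1)%N) B ->
  (c < 2 ^ t)%N -> mono B (2 ^ t + c) = mono (rem t B) c.
Proof.
move=> uB /allP HB Hc.
case Ht: (t \in B).
  rewrite /mono (perm_big _ (perm_to_rem Ht)) big_cons /= bvec_high // mul1r.
  apply: eq_big_seq => k Hk; apply: bvec_shift.
  move: Hk; rewrite mem_rem_uniq // inE => /andP[Hkt HkB].
  by have := HB k HkB; rewrite ltnS leq_eqVlt (negbTE Hkt).
rewrite rem_id ?Ht //; apply: mono_shift_low; apply/allP => k Hk.
have := HB k Hk; rewrite ltnS leq_eqVlt; case: eqP => // Ek.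
by rewrite -Ek Hk in Ht.
Qed.

Lemma mono_low_zero t B c : t \in B -> (c < 2 ^ t)%N -> mono B c = 0.
Proof.
move=> Ht Hc.
by rewrite /mono (perm_big _ (perm_to_rem Ht)) big_cons /= bvec_low // mul0r.
Qed.

Lemma sum_splitR (F : nat -> 'F_2) t :
  \sum_(c < 2 ^ t.+1) F c = \sum_(c < 2 ^ t) F c + \sum_(c < 2 ^ t) F (2 ^ t + c)%N.
Proof. exact: sum_split. Qed.

Lemma sum_splitN (F : nat -> nat) t :
  (\sum_(c < 2 ^ t.+1) F c = \sum_(c < 2 ^ t) F c + \sum_(c < 2 ^ t) F (2 ^ t + c))%N.
Proof. exact: sum_split. Qed.

Lemma rem_props t B : uniq B -> all (fun k => (k < t.+1)%N) B ->
  uniq (rem t B) /\ all (fun k => (k < t)%N) (rem t B).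
Proof.
move=> uB /allP HB; split; first exact: rem_uniq.
apply/allP => k; rewrite mem_rem_uniq // inE => /andP[Hkt HkB].
by have := HB k HkB; rewrite ltnS leq_eqVlt (negbTE Hkt).
Qed.

Lemma size_rem_le (t : nat) (B : seq nat) : (size (rem t B) <= size B)%N.
Proof.
case Ht: (t \in B); first by rewrite size_rem // leq_pred.
by rewrite rem_id ?Ht.
Qed.

Lemma even_mono t : forall B, uniq B -> all (fun k => (k < t)%N) B ->
  (size B < t)%N -> \sum_(c < 2 ^ t) mono B c = 0.
Proof.
elim: t => [|t IH] B uB aB sB //.
have [uR aR] := rem_props uB aB.
rewrite sum_splitR.
rewrite [X in _ + X](eq_bigr (fun c : 'I_(2 ^ t) => mono (rem t B) c)); last first.
  move=> i _ /=. by rewrite mono_shift.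
case Ht: (t \in B).
  rewrite big1 ?add0r; last by move=> i _; exact: (mono_low_zero Ht).
  apply: IH => //; rewrite size_rem //.
  by move: Ht sB; case: (B) => //= x B0 _; rewrite -subn1; lia.
by rewrite rem_id ?Ht // F2_add_self.
Qed.

Definition top (s r c : nat) : 'F_2 := ((2 ^ s - 2 ^ r.+1 <= c)%N : bool)%:R.

Lemma top_orth_aux r d : forall B, uniq B -> all (fun k => (k < r.+1 + d)%N) B ->
  (size B <= r)%N -> \sum_(c < 2 ^ (r.+1 + d)) top (r.+1 + d) r c * mono B c = 0.
Proof.
elim: d => [|d IH] B uB aB sB.
  rewrite addn0 in aB *; rewrite (eq_bigr (fun c : 'I_(2 ^ r.+1) => mono B c)).
    exact: even_mono.
  by move=> c _; rewrite /top subnn leq0n mul1r.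
rewrite addnS in aB *; rewrite (sum_splitR (fun c => top _ r c * mono B c)).
have Hle : (2 ^ r.+1 <= 2 ^ (r.+1 + d))%N by rewrite leq_exp2l // leq_addr.
rewrite big1 ?add0r; last first.
  move=> c _; rewrite /top.
  have Hc := ltn_ord c; move: (nat_of_ord c) Hc => {}c Hc.
  have -> : (2 ^ (r.+1 + d).+1 - 2 ^ r.+1 <= c)%N = false.
    by rewrite expnS; lia.
  by rewrite mul0r.
have [uR aR] := rem_props uB aB.
rewrite -[RHS](IH (rem (r.+1 + d) B)) //; last exact: leq_trans (size_rem_le _ _) sB.
apply: eq_bigr => c _.
have Hc := ltn_ord c; move: (nat_of_ord c) Hc => {}c Hc.
rewrite mono_shift //; congr (_ * _); rewrite /top.
by congr ((_ : bool)%:R); rewrite expnS; lia.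
Qed.

Definition orth (s r : nat) (y : nat -> 'F_2) :=
  forall B : seq nat, uniq B -> (size B <= r)%N -> all (fun k => (k < s)%N) B ->
  \sum_(c < 2 ^ s) y c * mono B c = 0.

Definition wt (s : nat) (y : nat -> 'F_2) : nat := (\sum_(c < 2 ^ s) (y c != 0%R))%N.

Lemma rm_dist s : forall r y, orth s r y ->
  (exists2 c, (c < 2 ^ s)%N & y c != 0) -> (2 ^ r.+1 <= wt s y)%N.
Proof.
elim: s => [|s IH] r y Ho [c0 Hc0 Hy0].
  have H0 := Ho [::] isT (leq0n r) isT.
  rewrite big_ord1 /mono big_nil mulr1 /= in H0.
  move: Hc0; rewrite expn0 ltnS leqn0 => /eqP Ec.
  by rewrite Ec H0 eqxx in Hy0.
pose z := fun c => y c + y (2 ^ s + c)%N.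
pose y1 := fun c => y (2 ^ s + c)%N.
have Hz : orth s r z.
  move=> B uB sB aB.
  have aB' : all (fun k => (k < s.+1)%N) B.
    by apply/allP => k Hk; have := allP aB k Hk; apply: ltnW.
  rewrite -[RHS](Ho B uB sB aB') (sum_splitR (fun c => y c * mono B c)) -big_split /=.
  by apply: eq_bigr => c _; rewrite mono_shift_low // mulrDl.
have Hwt : wt s.+1 y = (wt s y + wt s y1)%N by rewrite /wt (sum_splitN (fun c => (y c != 0) : nat)).
case: (boolP [exists c : 'I_(2 ^ s), z c != 0]) => [/existsP[c1 Hc]|Hn].
  have := IH r z Hz (ex_intro2 _ _ (nat_of_ord c1) (ltn_ord c1) Hc).
  move=> H; apply: (leq_trans H); rewrite Hwt /wt -big_split /=.
  by apply: leq_sum => i _; exact: (F2_neq_add (y i) (y (2 ^ s + i)%N)).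
have Hzy : forall c, (c < 2 ^ s)%N -> y c = y1 c.
  move=> c Hc; apply: F2_add0_eq.
  by move/existsPn: Hn => /(_ (Ordinal Hc)); rewrite negbK => /eqP.
have Hw : wt s y = wt s y1 by apply: eq_bigr => i _; rewrite Hzy.
have Hex : exists2 c, (c < 2 ^ s)%N & y1 c != 0.
  case: (ltnP c0 (2 ^ s)) => Hc.
    by exists c0 => //; rewrite -Hzy.
  exists (c0 - 2 ^ s)%N.
    by move: Hc0; rewrite expnS; lia.
  by rewrite /y1 subnKC.
rewrite Hwt Hw.
case: r Ho Hz => [|r] Ho Hz.
  case: Hex => c Hc Hyc.
  have : (1 <= wt s y1)%N.
    rewrite /wt (bigD1 (Ordinal Hc)) //= Hyc.
    by rewrite add1n.
  by rewrite expn1; lia.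
have Hy1 : orth s r y1.
  move=> B uB sB aB.
  have Hs : s \notin B.
    by apply/negP => /(allP aB); rewrite ltnn.
  have aB' : all (fun k => (k < s.+1)%N) (s :: B).
    by rewrite /= ltnSn /=; apply/allP => k Hk; have := allP aB k Hk; apply: ltnW.
  have uB' : uniq (s :: B) by rewrite /= Hs uB.
  have := Ho (s :: B) uB' sB aB'; rewrite (sum_splitR (fun c => y c * mono (s :: B) c)).
  rewrite big1 ?add0r; last first.
    by move=> i _; rewrite /mono big_cons /= bvec_low // mul0r mulr0.
  move=> H; rewrite -[RHS]H; apply: eq_bigr => i _.
  rewrite /mono big_cons /= bvec_high // mul1r; congr (_ * _); apply: eq_big_seq => k Hk; by rewrite bvec_shift // (allP aB k Hk).
have := IH r y1 Hy1 Hex.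
by rewrite (expnS 2 r.+1); lia.
Qed.

Lemma prodrow_mono s (A : {set 'I_s}) c :
  prodrow A c = mono (map val (enum A)) c.
Proof.
rewrite /mono big_map big_enum /prodrow.
by case: eqP => [->|//]; rewrite big_set0.
Qed.

Lemma valid_card m l r i (A : {set 'I_(m - l)}) :
  @valid_label m l r i A -> (#|A| <= r)%N.
Proof.
rewrite /valid_label => /and3P[H1 H2]; case: ifP => _.
  by move/eqP => ->; rewrite leq_subr.
by move=> H; apply: (leq_trans H); rewrite leq_subr.
Qed.

Lemma Grow_before m l t i (A : {set 'I_(m - l)}) n :
  (n < t * 2 ^ (m - l))%N -> @Grow m l t i A n = 0.
Proof.
move=> H; rewrite /Grow.
have : (n %/ 2 ^ (m - l) < t)%N by rewrite ltn_divLR // expn_gt0.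
by rewrite ltnNge => /negbTE ->.
Qed.

Lemma Grow_at m l t i (A : {set 'I_(m - l)}) c :
  (c < 2 ^ (m - l))%N -> @Grow m l t i A (t * 2 ^ (m - l) + c) = prodrow A c.
Proof.
move=> Hc; rewrite /Grow divnMDl ?expn_gt0 // divn_small // addn0 leqnn /=.
rewrite -{1}(addn0 t) ltn_add2l expn_gt0 /= subnn modnMDl modn_small //.
rewrite /Gblock; case: ifP => // _.
by rewrite /wrep mod0n /= mulr1n mul1r.
Qed.

Lemma Grow_low m l t i (A : {set 'I_(m - l)}) n :
  (n < 2 ^ (m - l))%N -> @Grow m l t i A n = if t == 0%N then prodrow A n else 0.
Proof.
move=> Hn; case: t => [|t] /=.
  by have := @Grow_at m l 0 i A n Hn; rewrite mul0n add0n.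
apply: Grow_before; apply: (leq_trans Hn); rewrite mulSn leq_addr //.
Qed.

Lemma top_orth r s B : (r < s)%N -> uniq B -> all (fun k => (k < s)%N) B ->
  (size B <= r)%N -> \sum_(c < 2 ^ s) top s r c * mono B c = 0.
Proof.
move=> H; move: B; rewrite -(subnKC H) => B; exact: top_orth_aux.
Qed.

Lemma enum_props s (A : {set 'I_s}) :
  uniq (map val (enum A)) /\ all (fun k => (k < s)%N) (map val (enum A)) /\
  size (map val (enum A)) = #|A|.
Proof.
split; first by rewrite map_inj_uniq ?enum_uniq //; exact: val_inj.
split; last by rewrite size_map cardE.
by apply/allP => k /mapP[x _ ->]; exact: ltn_ord.
Qed.

Lemma upper (m l r : nat) :
  (r < m - l)%N ->
  (exists u, inDual m l r u /\ nonzero u /\ weight u = (2 ^ r.+1)%N).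
Proof.
move=> Hr.
have Hle : (2 ^ r.+1 <= 2 ^ (m - l))%N by rewrite leq_exp2l.
have Hw : weight (mkseq (top (m - l) r) (2 ^ (m - l))) = (2 ^ r.+1)%N.
  rewrite /weight /mkseq count_map.
  have -> : iota 0 (2 ^ (m - l)) =
    iota 0 (2 ^ (m - l) - 2 ^ r.+1) ++ iota (2 ^ (m - l) - 2 ^ r.+1) (2 ^ r.+1).
    by rewrite -iotaD subnK.
  rewrite count_cat.
  rewrite (@eq_in_count _ _ pred0); last first.
    move=> x; rewrite mem_iota add0n => /andP[_ Hx] /=.
    by rewrite /top F2_bool leqNgt Hx.
  rewrite count_pred0 add0n (@eq_in_count _ _ predT) ?count_predT ?size_iota //.
  move=> x; rewrite mem_iota => /andP[Hx _] /=.
  by rewrite /top F2_bool Hx.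
exists (mkseq (top (m - l) r) (2 ^ (m - l))); split; last first.
  by split => //; rewrite /nonzero has_count -/(weight _) Hw expn_gt0.
move=> v [S [HS Hv]].
rewrite size_mkseq.
rewrite (eq_bigr (fun n : 'I_(2 ^ (m - l)) =>
   \sum_(p <- S) p.2 * (top (m - l) r n * @Grow m l p.1.1.1 p.1.1.2 p.1.2 n))); last first.
  move=> n _; rewrite nth_mkseq // Hv mulr_sumr; apply: eq_bigr => p _.
  by rewrite mulrCA.
rewrite exchange_big /= big1_seq // => p /andP[_ Hp].
rewrite -mulr_sumr.
have Hvl := allP HS p Hp.
have -> : \sum_(i < 2 ^ (m - l)) top (m - l) r i * @Grow m l p.1.1.1 p.1.1.2 p.1.2 i = 0.
  case: (p.1.1.1 =P 0%N) => Ht.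
    rewrite (eq_bigr (fun c : 'I_(2 ^ (m - l)) => top (m - l) r c * mono (map val (enum p.1.2)) c)).
      have [u1 [a1 s1]] := enum_props p.1.2.
      apply: top_orth => //; rewrite s1; exact: valid_card Hvl.
    by move=> c _; rewrite Grow_low // Ht eqxx prodrow_mono.
  rewrite big1 // => c _; rewrite Grow_low //.
  by move/eqP/negbTE: Ht => ->; rewrite mulr0.
by rewrite mulr0.
Qed.

Lemma lower (m l r : nat) :
  forall u, inDual m l r u -> nonzero u -> (2 ^ r.+1 <= weight u)%N.
Proof.
move=> u Hd Hnz.
have d0 : (0 < 2 ^ (m - l))%N by rewrite expn_gt0.
pose P := fun n => (n < size u)%N && (u`_n != 0).
have exP : exists n, P n.
  move: Hnz => /hasP[x Hx Hx0]; move: Hx => /(nthP 0)[n Hn Hnx].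
  by exists n; rewrite /P Hn Hnx.
have ubP : forall n, P n -> (n <= size u)%N by move=> n /andP[H _]; exact: ltnW.
case: (ex_maxnP exP ubP) => N /andP[HN HuN] Hmax.
pose K := (N %/ 2 ^ (m - l))%N.
have Hzero : forall n, (K < n %/ 2 ^ (m - l))%N -> u`_n = 0.
  move=> n Hn; case: (ltnP n (size u)) => Hs; last by rewrite nth_default.
  apply/eqP; apply: contraTT Hn => Hne; rewrite -leqNgt leq_div2r //.
  by apply: Hmax; rewrite /P Hs Hne.
pose y := fun c => u`_(K * 2 ^ (m - l) + c)%N.
have Hy : orth (m - l) r y.
  move=> B uB sB aB.
  pose A := [set k : 'I_(m - l) | val k \in B].
  have HA : perm_eq (map val (enum A)) B.
    apply: uniq_perm => //; first by rewrite map_inj_uniq ?enum_uniq //; exact: val_inj.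
    move=> x; apply/mapP/idP => [[k Hk ->]|Hx].
      by move: Hk; rewrite mem_enum inE.
    have Hx' : (x < m - l)%N by exact: (allP aB).
    by exists (Ordinal Hx'); rewrite // mem_enum inE.
  have cA : #|A| = size B by rewrite cardE -(size_map val) (perm_size HA).
  have Hpm : forall c, prodrow A c = mono B c.
    by move=> c; rewrite prodrow_mono /mono (perm_big _ HA).
  pose i := if (r < #|A| + l)%N then (r - #|A|)%N else l.
  have Hv : @valid_label m l r i A.
    have cr : (#|A| <= r)%N by rewrite cA.
    rewrite /valid_label /i; case: (ltnP r (#|A| + l)) => H1.
      rewrite (_ : (r - #|A| < l)%N = true); last by lia.
      apply/and3P; split; [lia|lia|by rewrite subKn].
    have Hlr : (l <= r)%N := leq_trans (leq_addl _ _) H1.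
    by rewrite ltnn leqnn Hlr /= leq_subRL // addnC.
  have Hcode : inCode m l r (fun n => @Grow m l K i A n).
    exists [:: (K, i, A, 1)]; split; first by rewrite /= Hv.
    by move=> n; rewrite big_seq1 /= mul1r.
  have := Hd _ Hcode.
  set M' := maxn (size u) (K * 2 ^ (m - l) + 2 ^ (m - l)).
  rewrite (@big_ext _ 0 +%R (fun n => u`_n * @Grow m l K i A n) (size u) M' (leq_maxl _ _));
    last by move=> n Hn; rewrite nth_default // mul0r.
  rewrite (@big3 _ 0 +%R (fun n => u`_n * @Grow m l K i A n) _ _ M' (leq_maxr _ _)).
  move=> Hs.
  have E1 : \big[+%R/0]_(n < K * 2 ^ (m - l)) (u`_n * @Grow m l K i A n) = 0.
    by apply: big1 => n _; rewrite Grow_before ?mulr0.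
  have E3 : \big[+%R/0]_(K * 2 ^ (m - l) + 2 ^ (m - l) <= n < M') (u`_n * @Grow m l K i A n) = 0.
    apply: big1_seq => n /andP[_]; rewrite mem_iota => /andP[Hn _].
    rewrite Hzero ?mul0r //.
    by rewrite leq_divRL // mulSn addnC.
  rewrite E1 E3 /= add0r addr0 in Hs.
  rewrite -[RHS]Hs; apply: eq_bigr => c _.
  by rewrite Grow_at // Hpm.
have Hex : exists2 c, (c < 2 ^ (m - l))%N & y c != 0.
  exists (N %% 2 ^ (m - l))%N; first by rewrite ltn_pmod.
  by rewrite /y /K -divn_eq.
apply: (leq_trans (rm_dist Hy Hex)).
rewrite /weight (count_sum _ 0) /wt.
rewrite (@big_ext _ 0%N addn (fun n => (u`_n != 0 : nat)) (size u)
   (maxn (size u) (K * 2 ^ (m - l) + 2 ^ (m - l))) (leq_maxl _ _)); last first.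
  by move=> n Hn; rewrite nth_default.
rewrite (@big3 _ 0%N addn (fun n => (u`_n != 0 : nat)) _ _ _ (leq_maxr _ _)).
rewrite /= -addnA; exact: leq_trans (leq_addr _ _) (leq_addl _ _).
Qed.

Theorem mainTheorem11 (m l r : nat) :
  (1 <= l)%N -> (l <= m)%N -> (r < m - l)%N ->
  (exists u, inDual m l r u /\ nonzero u /\ weight u = (2 ^ r.+1)%N) /\
  (forall u, inDual m l r u -> nonzero u -> (2 ^ r.+1 <= weight u)%N).
Proof.
move=> _ _ Hr; split; [exact: upper | exact: lower].
Qed.
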